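(* Let $\mathscr D$ be a cyclic symmetric $(v,k,\lambda)$ design and let $p$ be a prime dividing $k-\lambda$ but not dividing $v$. Then $\mathscr D$ is additive under $\mathrm{EA}(p^t)$, where $t=\mathrm{ord}_v(p)$.
   Context: A symmetric $(v,k,\lambda)$ design is a $2$-$(v,k,\lambda)$ design $(V,\mathscr B)$ with as many blocks as points. It is cyclic if there is a cyclic permutation of $V$ (a permutation acting as a single $v$-cycle) leaving $\mathscr B$ invariant. $\mathrm{EA}(p^t)$ denotes the elementary abelian group of order $p^t$ (the additive group of $\mathbb{F}_{p^t}$), and $\mathrm{ord}_v(p)$ is the multiplicative order of $p$ modulo $v$. A design $(V,\mathscr B)$ is additive under an abelian group $G$ if there is an injective map $f:V\to G$ such that $\sum_{x\in B}f(x)=0$ for every block $B\in\mathscr B$. *)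

(* Defs.v *)
From HB Require Import structures.
From mathcomp Require Import all_boot all_order all_algebra all_fingroup.
Set Implicit Arguments. Unset Strict Implicit. Unset Printing Implicit Defensive.
Import GRing.Theory.

Definition symmetric_design (V : finType) (Bs : {set {set V}})
  (v k lambda : nat) : Prop :=
  [/\ #|V| = v,
      (forall B, B \in Bs -> #|B| = k),
      (forall x y : V, x != y -> #|[set B in Bs | (x \in B) && (y \in B)]| = lambda)
    & #|Bs| = v].

Definition is_full_cycle (V : finType) (s : {perm V}) : Prop :=
  forall x : V, porbit s x = [set: V].

Definition cyclic_design (V : finType) (Bs : {set {set V}}) : Prop :=
  exists s : {perm V}, is_full_cycle s /\ [set (s @: B) | B : {set V} in Bs] = Bs.

Definition is_mult_order (v p t : nat) : Prop :=
  [/\ 0 < t, p ^ t = 1 %[mod v]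
    & forall s, 0 < s -> p ^ s = 1 %[mod v] -> t <= s].

Definition additive_under (V : finType) (Bs : {set {set V}}) (G : zmodType) : Prop :=
  exists f : V -> G, injective f /\
    forall B, B \in Bs -> (\sum_(x in B) f x)%R = 0%R.

(* Main.v *)
Require Import Defs.
From HB Require Import structures.
From mathcomp Require Import all_boot all_order all_algebra all_fingroup.
From mathcomp Require Import all_solvable all_field.
From mathcomp Require Import zify ring.
Set Implicit Arguments. Unset Strict Implicit. Unset Printing Implicit Defensive.

Section Orbit.
Variables (V : finType) (s : {perm V}).
Hypothesis Hfull : forall x : V, porbit s x = [set: V].
Local Notation v := #|V|.

Lemma iter_v x : iter v s x = x.
Proof. by have := iter_porbit s x; rewrite Hfull cardsT. Qed.

Lemma iter_inj e : injective (iter e s).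
Proof. by move=> x y; rewrite -!permX; apply: perm_inj. Qed.

Lemma iter_mulv q x : iter (q * v) s x = x.
Proof. by elim: q => [|q IH] //=; rewrite mulSn iterD IH iter_v. Qed.

Lemma iter_mod n x : iter n s x = iter (n %% v) s x.
Proof. by rewrite {1}(divn_eq n v) addnC iterD iter_mulv. Qed.

Lemma traj_uniq y : uniq (traject s y v).
Proof. by have := uniq_traject_porbit s y; rewrite Hfull cardsT. Qed.

Lemma traj_mem y x : x \in traject s y v.
Proof. by have := porbit_traject s y x; rewrite Hfull cardsT inE. Qed.

Lemma iter_inj_lt y a b : a < v -> b < v -> iter a s y = iter b s y -> a = b.
Proof.
move=> ha hb e.
have := traj_uniq y => U.
rewrite -(nth_traject s ha y) -(nth_traject s hb y) in e.
by apply/eqP; rewrite -(nth_uniq y _ _ U) ?size_traject // e.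
Qed.

Lemma sum_orbit n (Hn : #|V| = n) (R : Type) (i0 : R) (op : Monoid.com_law i0) y (F : V -> R) :
  \big[op/i0]_(d < n) F (iter d s y) = \big[op/i0]_(x : V) F x.
Proof.
subst n.
have hinj : injective (fun d : 'I_v => iter d s y).
  by move=> a b /iter_inj_lt h; apply/val_inj/h.
have hb : bijective (fun d : 'I_v => iter d s y) by apply: (inj_card_bij hinj); rewrite card_ord.
by rewrite (reindex (fun d : 'I_v => iter d s y)) //; apply: onW_bij.
Qed.

Variable x0 : V.
Definition idx (x : V) := index x (traject s x0 v).

Lemma idx_lt x : idx x < v.
Proof. by rewrite /idx -[X in _ < X](size_traject s x0) index_mem traj_mem. Qed.

Lemma idxK x : iter (idx x) s x0 = x.
Proof.
by rewrite -(nth_traject s (idx_lt x)) nth_index // traj_mem.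
Qed.

Lemma idx_iter_lt j : j < v -> idx (iter j s x0) = j.
Proof.
move=> hj; rewrite /idx -(nth_traject s hj x0) index_uniq ?size_traject //.
exact: traj_uniq.
Qed.

Lemma idx_iter d y : idx (iter d s y) = (idx y + d) %% v.
Proof.
have v0 : 0 < v by apply/card_gt0P; exists x0.
rewrite -{1}(idxK y) -iterD iter_mod addnC idx_iter_lt //.
by rewrite ltn_mod.
Qed.

End Orbit.

Lemma cardS_sum (T : finType) (A : {set T}) : #|A| = \sum_x (x \in A).
Proof. by rewrite -sum1_card big_mkcond; apply: eq_bigr => x _; case: (x \in A). Qed.

Lemma card_sub_sum (T : finType) (A : {set T}) (P : pred T) :
  #|[set y in A | P y]| = \sum_(y in A) P y.
Proof.
rewrite cardS_sum [RHS]big_mkcond; apply: eq_bigr => y _; rewrite inE.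
by case: (y \in A); case: (P y).
Qed.

Import GRing.Theory Num.Theory.

Section Design.
Variables (V : finType) (Bs : {set {set V}}) (k lam : nat).
Hypothesis HBk : forall B, B \in Bs -> #|B| = k.
Hypothesis Hlam : forall x y : V, x != y ->
  #|[set B in Bs | (x \in B) && (y \in B)]| = lam.

Definition P2 (x y : V) := #|[set C in Bs | (x \in C) && (y \in C)]|.
Definition rr (x : V) := #|[set C in Bs | x \in C]|.

Lemma P2xx x : P2 x x = rr x.
Proof. by rewrite /P2 /rr; apply: eq_card => C; rewrite !inE andbb. Qed.

Lemma swapP (A A' : {set V}) :
  \sum_(C in Bs) ((\sum_(x in A) (x \in C)) * (\sum_(y in A') (y \in C)))
  = \sum_(x in A) \sum_(y in A') P2 x y.
Proof.
under eq_bigr => C _ do rewrite big_distrl /=.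
under eq_bigr => C _ do under eq_bigr => x _ do rewrite big_distrr /=.
rewrite exchange_big /=; apply: eq_bigr => x _.
rewrite exchange_big /=; apply: eq_bigr => y _.
by rewrite /P2 card_sub_sum; apply: eq_bigr => C _; case: (x \in C); case: (y \in C).
Qed.

Lemma sumP2 (A : {set V}) x : x \in A ->
  \sum_(y in A) P2 x y = rr x + (#|A| - 1) * lam.
Proof.
move=> xA; rewrite (bigD1 x) //= P2xx; congr (_ + _).
rewrite (eq_bigr (fun _ => lam)); last first.
  by move=> y /andP[_ yx]; rewrite /P2 Hlam // eq_sym.
rewrite sum_nat_const; congr (_ * _).
by rewrite (cardsD1 x A) xA add1n subn1 /=; apply: eq_card => y; rewrite !inE andbC.
Qed.


Variable s : {perm V}.
Hypothesis Hfull : forall x : V, porbit s x = [set: V].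
Hypothesis Himg : [set (s @: B) | B : {set V} in Bs] = Bs.
Hypothesis HBs : #|Bs| = #|V|.
Hypothesis Hv : 1 < #|V|.
Variable nv : nat.
Hypothesis Hn : #|V| = nv.

Lemma closS B : B \in Bs -> s @: B \in Bs.
Proof. by move=> hB; rewrite -Himg; apply: imset_f. Qed.

Lemma closI n B : B \in Bs -> [set iter n s x | x in B] \in Bs.
Proof.
move=> hB; elim: n => [|n IH].
  by rewrite (_ : [set iter 0 s x | x in B] = B) //; exact: imset_id.
have -> : [set iter n.+1 s x | x in B] = s @: [set iter n s x | x in B].
  by rewrite -imset_comp.
exact: closS.
Qed.

Lemma rr_s x : rr (s x) = rr x.
Proof.
rewrite /rr.
have -> : [set C in Bs | s x \in C] = [set s @: C | C : {set V} in [set C in Bs | x \in C]].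
  apply/setP => C; rewrite inE; apply/andP/imsetP.
  - case=> CBs sxC; move: CBs; rewrite -{1}Himg => /imsetP[C' C'Bs eC].
    exists C' => //; rewrite inE C'Bs /=.
    by rewrite eC mem_imset in sxC => //; exact: perm_inj.
  - case=> C'; rewrite inE => /andP[C'Bs xC'] ->.
    by split; [exact: closS | exact: imset_f].
by rewrite card_imset //; apply: imset_inj; exact: perm_inj.
Qed.

Lemma rr_iter n x : rr (iter n s x) = rr x.
Proof. by elim: n => [|n IH] //=; rewrite rr_s. Qed.

Lemma rr_const x y : rr x = rr y.
Proof. by rewrite -(idxK Hfull y x) rr_iter. Qed.

Lemma rrk x : rr x = k.
Proof.
have e : \sum_(y : V) rr y = #|V| * k.
  rewrite (eq_bigr (fun y => \sum_(C in Bs) (y \in C))); last by move=> y _; rewrite /rr card_sub_sum.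
  rewrite exchange_big /= -HBs -sum_nat_const; apply: eq_bigr => C hC.
  by rewrite -(HBk hC) cardS_sum.
rewrite (eq_bigr (fun _ => rr x)) in e; last by move=> y _; apply: rr_const.
rewrite sum_nat_const in e.
by apply/eqP; rewrite -(eqn_pmul2l (ltnW Hv)); apply/eqP.
Qed.


Lemma key_id : k * k = k + (#|V| - 1) * lam.
Proof.
have [x _] : exists x : V, x \in V by apply/card_gt0P; exact: ltnW.
have := swapP [set x] [set: V].
rewrite big_set1 (sumP2 (in_setT x)) cardsT rrk => <-.
rewrite -[k in k * _](rrk x) /rr card_sub_sum big_distrl /=.
apply: eq_bigr => C hC; congr (_ * _); first by rewrite big_set1.
by rewrite -(HBk hC) cardS_sum; apply: eq_bigl => y; rewrite in_setT.
Qed.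

Lemma k_range : 0 < k < #|V|.
Proof.
have [B0 hB0] : exists B, B \in Bs by apply/card_gt0P; rewrite HBs ltnW.
have kle : k <= #|V| by rewrite -(HBk hB0) max_card.
apply/andP; split.
  rewrite lt0n; apply/eqP => k0.
  have : Bs \subset [set set0].
    by apply/subsetP => B hB; rewrite inE -cards_eq0 (HBk hB) k0.
  by move/subset_leq_card; rewrite cards1 HBs leqNgt Hv.
rewrite ltn_neqAle kle andbT; apply/eqP => kv.
have : Bs \subset [set [set: V]].
  by apply/subsetP => B hB; rewrite inE eqEcard subsetT cardsT (HBk hB) kv leqnn.
by move/subset_leq_card; rewrite cards1 HBs leqNgt Hv.
Qed.

Lemma lam_lt_k : lam < k.
Proof.
have := key_id; have /andP[k0 kv] := k_range.
nia.
Qed.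

Lemma dual B C : B \in Bs -> C \in Bs -> B != C -> #|B :&: C| = lam.
Proof.
move=> hB hC nBC.
pose a (D : {set V}) := \sum_(x in B) (x \in D).
have aE D : #|B :&: D| = a D.
  rewrite /a -card_sub_sum; apply: eq_card => x; rewrite !inE //.
have S1 : \sum_(D in Bs) a D = k * k.
  rewrite /a exchange_big /= -{1}(HBk hB) -sum_nat_const; apply: eq_bigr => x _.
  by rewrite -(rrk x) /rr card_sub_sum.
have S2 : \sum_(D in Bs) a D * a D = k * (k + (k - 1) * lam).
  rewrite /a swapP -{1}(HBk hB) -sum_nat_const; apply: eq_bigr => x xB.
  by rewrite sumP2 // rrk (HBk hB).
have aB : a B = k by rewrite -aE setIid HBk.
rewrite (bigD1 B) //= aB in S1.
rewrite (bigD1 B) //= aB in S2.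
set Bs' := [pred D | (D \in Bs) && (D != B)] in S1 S2.
have Hle := @leqif_sum _ Bs' (fun D => a D == lam) (fun D => 4 * (a D * lam))
   (fun D => (a D + lam) ^ 2) (fun D _ => nat_AGM2 (a D) lam).
have card' : #|Bs'| = #|V| - 1.
  by rewrite -HBs (cardsD1 B Bs) hB add1n subn1 /=; apply: eq_card => D; rewrite !inE andbC.
have Heq : \sum_(D | Bs' D) 4 * (a D * lam) = \sum_(D | Bs' D) (a D + lam) ^ 2.
  rewrite -big_distrr /= -big_distrl /=.
  rewrite [RHS](eq_bigr (fun D => a D * a D + (2 * lam * a D + lam * lam))); last first.
    by move=> D _ /=; nia.
  rewrite big_split big_split /= sum_nat_const card' -big_distrr /=.
  have := key_id; have /andP[k0 kv] := k_range.
  move: S1 S2; set X := \sum_(i in Bs | i != B) a i; set Y := \sum_(i in Bs | i != B) _.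
  move=> S1 S2 e.
  have eX : X = k * (k - 1) by nia.
  have eY : Y = k * (k - 1) * lam by nia.
  have eV : (#|V| - 1) * lam = k * (k - 1) by nia.
  rewrite eX eY -mulnA -[in RHS]mulnA (mulnCA (#|V| - 1)) eV; set m := k * (k - 1).
  nia.
have := Hle.2; rewrite Heq eqxx => /esym /forall_inP H.
by rewrite aE; apply/eqP; apply: H; rewrite /Bs' inE hC eq_sym nBC.
Qed.

Definition cc (B : {set V}) d := #|[set y in B | iter d s y \in B]|.

Lemma cc0 B : B \in Bs -> cc B 0 = k.
Proof. by move=> hB; rewrite /cc -(HBk hB); apply: eq_card => y; rewrite !inE andbb. Qed.

Lemma cc_sum B : B \in Bs -> \sum_(d < nv) cc B d = k * k.
Proof.
move=> hB; rewrite /cc.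
under eq_bigr => d _ do rewrite card_sub_sum.
rewrite exchange_big /= -{1}(HBk hB) -sum_nat_const; apply: eq_bigr => y yB.
by rewrite (sum_orbit Hfull Hn addn y (fun x => nat_of_bool (x \in B))) -(HBk hB) cardS_sum.
Qed.

Lemma cc_cases B d : B \in Bs -> d < #|V| -> (cc B d = k) \/ (cc B d = lam).
Proof.
move=> hB dv.
have c1 : cancel (iter (#|V| - d) s) (iter d s).
  by move=> x; rewrite -iterD (subnKC (ltnW dv)) (iter_v Hfull).
have c2 : cancel (iter d s) (iter (#|V| - d) s).
  by move=> x; rewrite -iterD (subnK (ltnW dv)) (iter_v Hfull).
have := can2_imset_pre B c1 c2 => e.
have hC : (iter d s) @^-1: B \in Bs by rewrite -e closI.
have -> : cc B d = #|B :&: (iter d s) @^-1: B|.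
  by apply: eq_card => y; rewrite !inE.
have [<-|ne] := eqVneq B ((iter d s) @^-1: B).
  by left; rewrite setIid HBk.
by right; apply: dual.
Qed.

Lemma cc_lam B d : B \in Bs -> 0 < d < #|V| -> cc B d = lam.
Proof.
move=> hB /andP[d0 dv].
have v0 : 0 < nv by rewrite -Hn; apply: ltnW.
have S := cc_sum hB.
rewrite (bigD1 (Ordinal v0)) //= cc0 // in S.
have H : forall i : 'I_nv, (i != Ordinal v0) -> lam <= cc B i ?= iff (lam == cc B i).
  move=> i _; split => //.
  have iv : i < #|V| by rewrite Hn.
  by case: (cc_cases hB iv) => ->; [exact: ltnW lam_lt_k | exact: leqnn].
have Hle := leqif_sum H.
have Hc : #|[pred i : 'I_nv | i != Ordinal v0]| = nv - 1.
  by rewrite cardC1 card_ord subn1.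
have Heq : \sum_(i < nv | i != Ordinal v0) lam = \sum_(i < nv | i != Ordinal v0) cc B i.
  rewrite sum_nat_const.
  have := key_id; rewrite Hn.
  move: S Hc; set X := \sum_(i < nv | _) cc B i; set Y := #|_|.
  move=> S Hc e; rewrite Hc.
  lia.
have := Hle.2; rewrite Heq eqxx => /esym /forall_inP HH.
have dv' : d < nv by rewrite -Hn.
have : Ordinal dv' != Ordinal v0 by rewrite -val_eqE /= -lt0n.
by move/HH => /eqP <-.
Qed.

Lemma cover B0 : B0 \in Bs -> forall B, B \in Bs ->
  exists e : 'I_nv, B = [set iter e s x | x in B0].
Proof.
move=> hB0.
pose f := fun e : 'I_nv => [set iter e s x | x in B0].
have inj : injective f.
  move=> e1 e2 E; apply/val_inj => /=.
  have e1v := ltn_ord e1; have e2v := ltn_ord e2.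
  pose d := (nv - e1 + e2) %% nv.
  have allB : forall y, y \in B0 -> iter d s y \in B0.
    move=> y yB.
    have : iter e2 s y \in f e2 by apply: imset_f.
    rewrite -E => /imsetP[z zB ez].
    have -> : iter d s y = z.
      have im : forall m x, iter m s x = iter (m %% nv) s x.
        by move=> m x; rewrite -Hn; exact: iter_mod.
      have iv : forall x, iter nv s x = x by move=> x; rewrite -Hn; exact: iter_v.
      by rewrite /d -im iterD ez -iterD (subnK (ltnW e1v)) iv.
    exact: zB.
  have ccd : cc B0 d = k.
    by rewrite /cc -(HBk hB0); apply: eq_card => y; rewrite !inE; case yB: (y \in B0) => //=; rewrite allB.
  have dv : d < nv by rewrite ltn_mod; apply: leq_ltn_trans e1v.
  have d0 : d = 0.
    apply/eqP; rewrite eqn0Ngt; apply/negP => d0.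
    have : cc B0 d = lam by apply: cc_lam => //; rewrite d0 Hn dv.
    by rewrite ccd => ek; have := lam_lt_k; rewrite ek ltnn.
  have := divn_eq (nv - e1 + e2) nv; rewrite -/d d0 addn0.
  case: (_ %/ _) => [|[|q]]; rewrite ?mul0n ?mul1n ?mulSn; lia.
have sub : f @: setT \subset Bs.
  by apply/subsetP => _ /imsetP[e _ ->]; exact: closI.
have eqO : f @: setT = Bs.
  apply/eqP; rewrite eqEcard sub /= card_imset // cardsT card_ord HBs Hn //.
move=> B; rewrite -eqO => /imsetP[e _ ->]; exists e => //.
Qed.

Variables (F : fieldType) (x0 : V).
Local Open Scope ring_scope.

Definition gg (w : F) (x : V) := w ^+ idx s x0 x.

Lemma gg_iter w d y : w ^+ nv = 1 -> gg w (iter d s y) = w ^+ d * gg w y.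
Proof.
move=> wn; rewrite /gg (idx_iter Hfull) Hn (expr_mod _ wn) exprD mulrC //.
Qed.

Lemma gg_inj w : nv.-primitive_root w -> injective (gg w).
Proof.
move=> pw x y; rewrite /gg => /eqP; rewrite (eq_prim_root_expr pw) => e.
have lx := idx_lt Hfull x0 x; have ly := idx_lt Hfull x0 y; rewrite Hn in lx ly.
rewrite !modn_small // in e.
by rewrite -(idxK Hfull x0 x) -(idxK Hfull x0 y) (eqP e).
Qed.

Lemma sum_ind (B : {set V}) (h : V -> F) :
  \sum_(x in B) h x = \sum_x (x \in B)%:R * h x.
Proof.
rewrite big_mkcond; apply: eq_bigr => x _.
by case: (x \in B); rewrite ?mul1r ?mul0r.
Qed.

Lemma prod_sum w B : B \in Bs -> nv.-primitive_root w ->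
  (\sum_(x in B) gg w x) * (\sum_(y in B) (gg w y)^-1) = k%:R - lam%:R.
Proof.
move=> hB pw.
have wn := prim_expr_order pw.
have gnz y : gg w y != 0.
  have w0 : w != 0 by rewrite (prim_root_eq0 pw) -lt0n (prim_order_gt0 pw).
  by rewrite /gg expf_neq0.
rewrite mulr_sumr.
have step y : (\sum_(x in B) gg w x) * (gg w y)^-1 =
    \sum_(d < nv) (iter d s y \in B)%:R * w ^+ d.
  rewrite sum_ind mulr_suml -(sum_orbit Hfull Hn _ y).
  apply: eq_bigr => d _; rewrite gg_iter // mulrA mulfK //.
under eq_bigr => y _ do rewrite step.
rewrite exchange_big /=.
have cE d : \sum_(y in B) (iter d s y \in B)%:R * w ^+ d = (cc B d)%:R * w ^+ d :> F.
  rewrite -mulr_suml /cc card_sub_sum natr_sum; congr (_ * _).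
have v0 : (0 < nv)%N by rewrite -Hn; apply: ltnW.
under eq_bigr => d _ do rewrite cE.
rewrite (bigD1 (Ordinal v0)) //= cc0 // expr0 mulr1.
have -> : \sum_(i < nv | i != Ordinal v0) (cc B i)%:R * w ^+ i =
          \sum_(i < nv | i != Ordinal v0) lam%:R * w ^+ i.
  apply: eq_bigr => i hi; rewrite (cc_lam hB) //.
  have i0 : (0 < i)%N by move: hi; rewrite -val_eqE /= lt0n.
  by rewrite i0 /= Hn ltn_ord.
have w1 : w != 1.
  apply/eqP => w1; move: pw; rewrite w1 => p1.
  have := prim_order_dvd p1 1; rewrite expr1 eqxx dvdn1 => /eqP e.
  by move: Hv; rewrite Hn e.
have S0 : \sum_(i < nv) w ^+ i = 0.
  have := subrX1 w nv; rewrite wn subrr => /esym /eqP.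
  by rewrite mulf_eq0 subr_eq0 (negbTE w1) /= => /eqP.
rewrite -mulr_sumr.
have -> : \sum_(i : 'I_nv | i != Ordinal v0) w ^+ i = -1.
  move: S0; rewrite (bigD1 (Ordinal v0)) //= expr0 => /eqP.
  by rewrite addrC addr_eq0 => /eqP.
by rewrite mulrN1.
Qed.

Lemma all_zero w : w ^+ nv = 1 -> forall B0, B0 \in Bs -> \sum_(x in B0) gg w x = 0 ->
  forall B, B \in Bs -> \sum_(x in B) gg w x = 0.
Proof.
move=> wn B0 hB0 S B hB; have [e ->] := cover hB0 hB.
rewrite big_imset; last by move=> x y _ _; exact: iter_inj.
under eq_bigr => x _ do rewrite gg_iter //.
by rewrite -mulr_sumr S mulr0.
Qed.

Lemma exists_good (z : F) : nv.-primitive_root z -> (k%:R - lam%:R : F) = 0 ->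
  exists w : F, [/\ w ^+ nv = 1, injective (gg w) &
     forall B, B \in Bs -> \sum_(x in B) gg w x = 0].
Proof.
move=> pz kl.
have [B0 hB0] : exists B, B \in Bs by apply/card_gt0P; rewrite HBs ltnW.
have := prod_sum hB0 pz; rewrite kl => /eqP; rewrite mulf_eq0 => /orP[] /eqP S.
  exists z; split; first exact: prim_expr_order.
    exact: gg_inj.
  by apply: (all_zero _ hB0 S); exact: prim_expr_order.
have zn : (z^-1) ^+ nv = 1 by rewrite exprVn prim_expr_order // invr1.
have gE y : gg z^-1 y = (gg z y)^-1 by rewrite /gg exprVn.
exists z^-1; split => //.
  by move=> x y; rewrite !gE => /invr_inj; apply: gg_inj.
apply: (all_zero zn hB0).
by under eq_bigr => y _ do rewrite gE.
Qed.

End Design.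

Unset Implicit Arguments.

Theorem theorem3p1 (V : finType) (Bs : {set {set V}}) (v k lambda p t : nat) :
  symmetric_design Bs v k lambda ->
  cyclic_design Bs ->
  prime p ->
  (p%:Z %| (k%:Z - lambda%:Z)%R)%Z ->
  ~~ (p %| v) ->
  is_mult_order v p t ->
  additive_under Bs 'rV['F_p]_t.
Proof.
move=> [HV HBk Hlam HBs] [s [Hfull Himg]] pp pdiv npv [t0 pt tmin].
subst v.
have [hle|Hv] := leqP #|V| 1.
  exists (fun _ => 0%R); split.
    by move=> x y _; move/card_le1_eqP: hle => H; apply: H.
  by move=> B _; rewrite big1.
have [x0 _] : exists x : V, x \in V by apply/card_gt0P; exact: ltnW.
have [F chF cardF] := pPrimePowerField pp t0.
set m := #|F|.-1.
have cardFm : #|F| = m.+1 by rewrite prednK // cardF expn_gt0 prime_gt0.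
have /hasP[z0 _ pz0] : has (m.-primitive_root)%R (enum (predC1 (0%R : F))).
  apply: has_prim_root.
  - by rewrite /m cardF -subn1 subn_gt0 -(expn0 p) ltn_exp2l ?prime_gt1.
  - apply/allP => x; rewrite mem_enum /= => xn0; rewrite unity_rootE.
    have := expf_card x; rewrite cardFm exprS => e.
    by apply/eqP; apply: (mulfI xn0); rewrite mulr1.
  - exact: enum_uniq.
  - by rewrite -cardE cardC1.
have vm : #|V| %| m.
  rewrite /m cardF -subn1 -eqn_mod_dvd ?expn_gt0 ?prime_gt0 //.
  by apply/eqP.
have pz := dvdn_prim_root pz0 vm.
have kl : ((k%:R - lambda%:R)%R : F) = 0%R.
  case/dvdzP: pdiv => q hq.
  have : (((k%:Z - lambda%:Z)%:~R : F) = ((q * p%:Z)%:~R : F))%R by rewrite hq.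
  rewrite intrM -pmulrn (pcharf0 chF) mulr0 => <-.
  by rewrite rmorphB /= -!pmulrn.
have [w [wn winj wsum]] := exists_good HBk Hlam Hfull Himg HBs Hv (erefl _) x0 pz kl.
have va := pprimeChar_vectAxiom chF.
have ht : logn p #|pPrimeCharType chF| = t by rewrite -(pfactorK t pp) -cardF.
rewrite -ht.
case: va => f flin fbij.
have f0 : f 0%R = 0%R.
  have := flin 1%R 0%R 0%R; rewrite scale1r !addr0 => e.
  have := congr1 (fun u => (u - f 0%R)%R) e; rewrite subrr addrK scale1r => h.
  by rewrite -h.
have fD : {morph f : a b / (a + b)%R}.
  by move=> a b; have := flin 1%R a b; rewrite !scale1r.
exists (fun x => f (gg s x0 w x)); split.
  by move=> x y /(bij_inj fbij) /winj.
move=> B hB.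
rewrite -(big_morph f fD f0).
by rewrite (wsum B hB).
Qed.
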